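(* Let $q>0$, $d\ge0$ and $\mathcal{D}=\{(b_1,B_1),\ldots,(b_d,B_d)\}\subseteq[q]\times(2^{[q]}\smallsetminus\{\emptyset\})$ with $|B_j|\ge2$ for each $j\in[d]$. Then: (1) $\mathcal{E}_{\mathcal{D}}$ is minimally generated by $\varepsilon_{\mathcal{D},1},\ldots,\varepsilon_{\mathcal{D},q}$; (2) $Q(\mathcal{D})=Q(\mathcal{D}\cup\{(b,B)\})$ for every $(b,B)\in{\sf Div}(\mathcal{E}_{\mathcal{D}})$; (3) if $(b,B)\in{\sf Div}(\mathcal{E}_{\mathcal{D}})$ and $b\notin B$, then $b\in{\sf Base}(\mathcal{D})$.
   Context: Let $\mathsf k$ be a field and $S_{[q]}=\mathsf k[y_A:\emptyset\ne A\subseteq[q]]$. For $\mathcal{D}\subseteq[q]\times(2^{[q]}\smallsetminus\{\emptyset\})$ let $Q(\mathcal{D})=\{A\subseteq[q]: A\ne\emptyset,\ A\cap B\ne\emptyset\text{ for all }(b,B)\in\mathcal{D}\text{ with }b\in A\}$, $\varepsilon_{\mathcal{D},i}=\prod_{A\in Q(\mathcal{D}),\,i\in A}y_A$ for $i\in[q]$, and $\mathcal{E}_{\mathcal{D}}=(\varepsilon_{\mathcal{D},1},\ldots,\varepsilon_{\mathcal{D},q})$. ${\sf Base}(\mathcal{D})=\{b_1,\dots,b_d\}$. A divisibility relation on $\mathcal{E}_{\mathcal{D}}$ is a pair $(b,B)$ with $b\in[q]$, $\emptyset\ne B\subseteq[q]$ and $\varepsilon_{\mathcal{D},b}\mid\mathrm{lcm}(\varepsilon_{\mathcal{D},i}:i\in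 B)$; ${\sf Div}(\mathcal{E}_{\mathcal{D}})$ is the set of all these. *)

(* Defs.v *)
From HB Require Import structures.
From mathcomp Require Import all_boot all_order all_algebra.
From mathcomp Require Import mpoly.
Set Implicit Arguments. Unset Strict Implicit. Unset Printing Implicit Defensive.
Import GRing.Theory.
Local Open Scope ring_scope.

(* [q] = 'I_q.  The variables y_A of S_[q] are indexed by the nonempty
   subsets A of [q]; we number them via enum_rank. *)
Definition nesub (q : nat) := {A : {set 'I_q} | A != set0}.
Definition nvars (q : nat) : nat := #|{: nesub q}|.
Definition yidx (q : nat) (A : nesub q) : 'I_(nvars q) := enum_rank A.

Definition Sq (k : fieldType) (q : nat) := {mpoly k[nvars q]}.

Definition pairset (q : nat) := {set ('I_q * {set 'I_q})}.

Definition Qset (q : nat) (D : pairset q) : {set {set 'I_q}} :=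
  [set A : {set 'I_q} | (A != set0) &&
     [forall p in D, (p.1 \in A) ==> (A :&: p.2 != set0)]].

Definition Base (q : nat) (D : pairset q) : {set 'I_q} := [set p.1 | p in D].

(* exponent vector of eps_{D,i} = prod_{A in Q(D), i in A} y_A *)
Definition eps_mon (q : nat) (D : pairset q) (i : 'I_q) : 'X_{1..nvars q} :=
  (\sum_(A : nesub q | (val A \in Qset D) && (i \in val A)) U_(yidx A))%MM.

Definition eps (k : fieldType) (q : nat) (D : pairset q) (i : 'I_q) : Sq k q :=
  'X_[eps_mon D i].

(* lcm of the monomials eps_{D,i}, i in B (lcm of monomials = componentwise
   max of exponent vectors) *)
Definition eps_lcm (k : fieldType) (q : nat) (D : pairset q) (B : {set 'I_q})
  : Sq k q :=
  'X_[\big[@mlcm _/0%MM]_(i in B) eps_mon D i].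

Definition sdvd (k : fieldType) (q : nat) (f g : Sq k q) : Prop :=
  exists h : Sq k q, g = h * f.

Definition DivRel (k : fieldType) (q : nat) (D : pairset q)
  (b : 'I_q) (B : {set 'I_q}) : Prop :=
  B != set0 /\ sdvd (eps k D b) (eps_lcm k D B).

Definition in_ideal_others (R : comRingType) (q : nat) (g : 'I_q -> R)
  (i : 'I_q) (f : R) : Prop :=
  exists c : 'I_q -> R, f = \sum_(j < q | j != i) c j * g j.

(* The ideal (g 1, ..., g q) is minimally generated by g 1, ..., g q:
   no generator lies in the ideal generated by the others (equivalently, no
   proper subfamily generates the same ideal). *)
Definition minimally_generated (R : comRingType) (q : nat) (g : 'I_q -> R)
  : Prop :=
  forall i : 'I_q, ~ in_ideal_others g i (g i).

(* Main.v *)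
Require Import Defs.
From HB Require Import structures.
From mathcomp Require Import all_boot all_order all_algebra.
From mathcomp Require Import mpoly.
Set Implicit Arguments. Unset Strict Implicit. Unset Printing Implicit Defensive.
Import GRing.Theory.

Section Aux.
Local Open Scope ring_scope.

Lemma evalX0 (k : fieldType) (n : nat) (t : 'I_n) (m : 'X_{1..n}) :
  meval (fun s => if s == t then (0 : k) else 1) 'X_[m] = ((m t == 0)%N)%:R.
Proof.
rewrite mevalX (bigD1 t) //= eqxx expr0n big1 ?mulr1 // => s /negbTE ->.
by rewrite expr1n.
Qed.

Lemma evalX1 (k : fieldType) (n : nat) (m : 'X_{1..n}) :
  meval (fun _ => (1 : k)) 'X_[m] = 1.
Proof. by rewrite mevalX big1 // => s _; rewrite expr1n. Qed.

Lemma eps_comp (q : nat) (D : pairset q) (i : 'I_q) (A : nesub q) :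
  eps_mon D i (yidx A) = ((val A \in Qset D) && (i \in val A)) :> nat.
Proof.
rewrite /eps_mon mnm_sumE.
rewrite (eq_bigr (fun A' => (A' == A) : nat)); last first.
  by move=> A' _; rewrite mnm1E /yidx (inj_eq enum_rank_inj).
rewrite big_mkcond /= (bigD1 A) //= eqxx big1 ?addn0.
  by case: ifP.
by move=> A' /negbTE ->; case: ifP.
Qed.

Lemma lcm_comp (n : nat) (I : finType) (B : {set I}) (m : I -> 'X_{1..n})
  (t : 'I_n) :
  (0 < (\big[@mlcm _/0%MM]_(i in B) m i) t)%N -> exists2 i, i \in B & (0 < m i t)%N.
Proof.
apply: (big_ind (fun L : 'X_{1..n} => (0 < L t)%N -> exists2 i, i \in B & (0 < m i t)%N)).
- by rewrite mnm0E.
- move=> x y Hx Hy; rewrite /mlcm mnmE.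
  move=> H; case: (posnP (x t)) => Hxt; last exact: Hx.
  by apply: Hy; move: H; rewrite Hxt max0n.
- by move=> i Bi H; exists i.
Qed.

Lemma key (k : fieldType) (q : nat) (D : pairset q) (b : 'I_q) (B : {set 'I_q})
  (A : {set 'I_q}) :
  DivRel k D b B -> A \in Qset D -> b \in A -> exists2 i, i \in B & i \in A.
Proof.
move=> [_ [h Hh]] AQ bA.
have A0 : A != set0 by move: AQ; rewrite inE => /andP[].
pose A' : nesub q := exist _ A A0.
pose t := yidx A'.
have := @lcm_comp _ _ B (eps_mon D) t.
case: (posnP ((\big[@mlcm _/0%MM]_(i in B) eps_mon D i) t)) => Ht.
  have := congr1 (meval (fun s => if s == t then (0 : k) else 1)) Hh.
  rewrite /eps_lcm /eps mevalM !evalX0 Ht eqxx.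
  have -> : eps_mon D b t = 1%N by rewrite /t eps_comp /= AQ bA.
  by rewrite mulr0 => /eqP; rewrite oner_eq0.
case/(_ isT) => i iB; rewrite /t eps_comp /= lt0b => /andP[_ iA].
by exists i.
Qed.

End Aux.

Theorem proposition3p3 (k : fieldType) (q : nat) (D : pairset q) :
  (0 < q)%N ->
  (forall p, p \in D -> (2 <= #|p.2|)%N) ->
  [/\ minimally_generated (eps k D),
      (forall (b : 'I_q) (B : {set 'I_q}), DivRel k D b B ->
         Qset D = Qset (D :|: [set (b, B)]))
    & (forall (b : 'I_q) (B : {set 'I_q}), DivRel k D b B -> b \notin B ->
         b \in Base D)].
Proof.
move=> q0 HD; split.
- move=> i [c Hc].
  case: (eqVneq [set~ i] set0) => HA.
    have Hs : (\sum_(j < q | j != i) c j * eps k D j = 0)%R.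
      apply: big1 => j ji; exfalso.
      by have := in_setC1 j i; rewrite HA in_set0 ji.
    have := congr1 (meval (fun _ => (1 : k)%R)) Hc.
    by rewrite Hs meval0 /eps evalX1 => /eqP; rewrite oner_eq0.
  have AQ : [set~ i] \in Qset D.
    rewrite inE HA /=; apply/forallP => p; apply/implyP => pD; apply/implyP => _.
    have := HD p pD; rewrite (cardsD1 i) => H2.
    have : (0 < #|p.2 :\ i|)%N by move: H2; case: (i \in p.2); rewrite ?add0n ?add1n ?ltnS // => /ltnW.
    rewrite card_gt0 setDE setIC.
    by congr (_ != _); apply/setP => x; rewrite !inE.
  pose A' : nesub q := exist _ [set~ i] HA.
  pose t := yidx A'.
  have := congr1 (meval (fun s => if s == t then (0 : k)%R else 1%R)) Hc.
  rewrite /eps evalX0 rmorph_sum /= big1.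
    have -> : eps_mon D i t = 0%N by rewrite /t eps_comp /= AQ !inE eqxx.
    by move=> /eqP; rewrite oner_eq0.
  move=> j ji; rewrite mevalM evalX0.
  have -> : eps_mon D j t = 1%N by rewrite /t eps_comp /= AQ !inE ji.
  by rewrite mulr0.
- move=> b B HB; apply/setP => A; apply/idP/idP => AQ.
  + have AQ' := AQ; move: AQ; rewrite !inE => /andP[-> /forallP HA] /=.
    apply/forallP => p; apply/implyP; rewrite !inE => /orP[pD | /eqP ->].
      by have := HA p; rewrite pD.
    apply/implyP => /= bA; have [i iB iA] := key HB AQ' bA.
    by apply/set0Pn; exists i; rewrite inE iA iB.
  + move: AQ; rewrite !inE => /andP[-> /forallP HA] /=; apply/forallP => p.
    apply/implyP => pD; by have := HA p; rewrite !inE pD.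
- move=> b B HB bB; apply/negPn/negP => nb.
  have AQ : [set b] \in Qset D.
    rewrite inE; apply/andP; split; first by apply/set0Pn; exists b; rewrite inE.
    apply/forallP => p; apply/implyP => pD; apply/implyP; rewrite inE => /eqP pb.
    by case/negP: nb; apply/imsetP; exists p; rewrite // pb.
  have [i iB] := key HB AQ (set11 b).
  by rewrite inE => /eqP ib; rewrite -ib iB in bB.
Qed.
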